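(* Let $t$ be a positive rational number. If $G$ is a minimally $t$-tough split graph, then $G$ has a vertex of degree $\lceil 2t\rceil$.
   Context: All graphs are finite, simple and undirected. A graph is split if its vertex set can be partitioned into a clique and an independent set. $\omega(H)$ denotes the number of components of $H$. A cutset of $G$ is a vertex set $S$ with $G-S$ disconnected. For positive real $t$, $G$ is $t$-tough if $\omega(G-S)\le |S|/t$ for every cutset $S$; the toughness $\tau(G)$ is the largest such $t$, with $\tau(K_n)=\infty$ for all $n\ge1$. $G$ is minimally $t$-tough if $\tau(G)=t$ and $\tau(G-e)<t$ for every edge $e$ of $G$. *)

(* Defs.v *)
From mathcomp Require Import all_boot all_order all_algebra.
Set Implicit Arguments. Unset Strict Implicit. Unset Printing Implicit Defensive.
Import Order.TTheory GRing.Theory Num.Theory.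

Local Open Scope ring_scope.

Section Graphs.
Variable V : finType.

Definition simple_graph (g : rel V) : Prop := symmetric g /\ irreflexive g.

Definition del_verts (g : rel V) (S : {set V}) : rel V :=
  [rel x y | [&& g x y, x \notin S & y \notin S]].

Definition ncomp (g : rel V) (S : {set V}) : nat :=
  n_comp (del_verts g S) (~: S).

Definition cutset (g : rel V) (S : {set V}) : bool := (1 < ncomp g S)%N.

Definition tough (g : rel V) (t : rat) : Prop :=
  forall S : {set V}, cutset g S -> (ncomp g S)%:R <= #|S|%:R / t.

Definition toughness_is (g : rel V) (t : rat) : Prop :=
  tough g t /\ forall t' : rat, t < t' -> ~ tough g t'.

Definition toughness_lt (g : rel V) (t : rat) : Prop := ~ tough g t.

Definition del_edge (g : rel V) (u v : V) : rel V :=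
  [rel x y | g x y && ~~ (((x == u) && (y == v)) || ((x == v) && (y == u)))].

Definition minimally_tough (g : rel V) (t : rat) : Prop :=
  toughness_is g t /\
  forall u v : V, g u v -> toughness_lt (del_edge g u v) t.

Definition is_clique (g : rel V) (K : {set V}) : Prop :=
  forall x y, x \in K -> y \in K -> x != y -> g x y.

Definition is_indep (g : rel V) (I : {set V}) : Prop :=
  forall x y, x \in I -> y \in I -> ~~ g x y.

Definition split_graph (g : rel V) : Prop :=
  exists K I : {set V}, [/\ K :&: I = set0, K :|: I = setT,
                            is_clique g K & is_indep g I].

Definition degree (g : rel V) (x : V) : nat := #|[set y | g x y]|.

End Graphs.

(* Main.v *)
Require Import Defs.
From mathcomp Require Import all_boot all_order all_algebra.
From mathcomp Require Import lra zify.
Import Order.TTheory GRing.Theory Num.Theory.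

Section Comp.
Variable V : finType.
Implicit Types (h : rel V) (S P R : {set V}).

Lemma del_verts_sym h S : symmetric h -> symmetric (del_verts h S).
Proof. by move=> sh x y; rewrite /del_verts /= sh; case: (x \in S); case: (y \in S); rewrite ?andbT ?andbF. Qed.

Lemma connect_del_out h S x y :
  connect (del_verts h S) x y -> y = x \/ y \notin S.
Proof.
case/connectP=> p; elim: p x => [|a p IH] x /=; first by move=> _ ->; left.
case/andP=> /and3P[_ _ aS] pp ey; right.
by case: (IH a pp ey) => [->|].
Qed.

Lemma connect_isolated h S x y :
  (forall z, z \notin S -> ~~ h x z) ->
  connect (del_verts h S) x y -> y = x.
Proof.
move=> iso /connectP[[|a p] /=]; first by move=> _ ->.
by case/andP=> /and3P[hxa _ aS]; move: (iso a aS); rewrite hxa.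
Qed.

Arguments connect_isolated [h S x y].
Arguments connect_del_out [h S x y].

Lemma ncomp_ub h S R : symmetric h ->
  (forall x, x \notin S -> exists2 r, r \in R & connect (del_verts h S) x r) ->
  (ncomp h S <= #|R|)%N.
Proof.
move=> sh cov; rewrite /ncomp /n_comp_mem.
have sc := sym_connect_sym (del_verts_sym h S sh).
have H := leq_imset_card (fingraph.root (del_verts h S)) R.
apply: (leq_trans _ H).
apply: subset_leq_card; apply/subsetP => x /andP [rx xS].
have xS' : x \notin S by move: xS; rewrite /= in_setC.
have [r rR cxr] := cov x xS'.
apply/imsetP; exists r => //.
rewrite -(eqP rx); exact/(fingraph.rootP sc).
Qed.

Lemma ncomp_lb h S P r : symmetric h ->
  P \subset ~: S ->
  (forall x, x \in P -> x != r -> forall z, z \notin S -> ~~ h x z) ->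
  (#|P| <= ncomp h S)%N.
Proof.
move=> sh PS iso; rewrite /ncomp /n_comp_mem.
have sc := sym_connect_sym (del_verts_sym h S sh).
have inj : {in P &, injective (fingraph.root (del_verts h S))}.
  move=> x y xP yP /(fingraph.rootP sc) cxy.
  have [xr|xr] := eqVneq x r.
    have [yr|yr] := eqVneq y r; first by rewrite xr yr.
    by rewrite sc in cxy; rewrite (connect_isolated (iso y yP yr) cxy).
  by rewrite (connect_isolated (iso x xP xr) cxy).
rewrite -(card_in_imset inj); apply: subset_leq_card; apply/subsetP => y.
case/imsetP=> x xP ->; rewrite !inE /= roots_root /=.
have xS : x \notin S by move/subsetP: PS => /(_ x xP); rewrite inE.
case: (connect_del_out (connect_root (del_verts h S) x)) => [->|] //.
exact: sc.
Qed.

End Comp.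

Set Implicit Arguments. Unset Strict Implicit.
Local Open Scope ring_scope.

Section Main.
Variables (V : finType) (g : rel V) (t : rat) (K I : {set V}).
Hypotheses (sg : symmetric g) (ig : irreflexive g) (t0 : 0 < t) (tg : tough g t).
Hypotheses (KI : K :&: I = set0) (KUI : K :|: I = setT).
Hypotheses (cl : is_clique g K) (ind : is_indep g I).
Implicit Types (S P R : {set V}) (r : V).

Lemma inK x : (x \in K) = (x \notin I).
Proof.
apply/idP/idP => [xK|xI].
  apply/negP => xI; have : x \in K :&: I by rewrite inE xK xI.
  by rewrite KI inE.
have : x \in K :|: I by rewrite KUI inE.
by rewrite inE (negbTE xI) orbF.
Qed.

Lemma nbrK x z : x \in I -> g x z -> z \in K.
Proof. by move=> xI gxz; rewrite inK; apply/negP => zI; move: (ind xI zI); rewrite gxz. Qed.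

Lemma tough_bound S P r : P \subset ~: S ->
  (forall x, x \in P -> x != r -> forall z, z \notin S -> ~~ g x z) ->
  (1 < #|P|)%N -> #|P|%:R * t <= #|S|%:R.
Proof.
move=> PS iso P2.
have lb := ncomp_lb V g S P r sg PS iso.
have cS : cutset g S by rewrite /cutset (leq_trans P2 lb).
have := tg cS; rewrite ler_pdivlMr // => H.
apply: le_trans H; apply: ler_wpM2r; [exact: ltW | by rewrite ler_nat].
Qed.


Lemma del_edge_sym u w : symmetric (del_edge g u w).
Proof.
move=> x y; rewrite /del_edge /= sg.
by case: (x == u); case: (y == w); case: (x == w); case: (y == u).
Qed.

Hypothesis mt : forall u v, g u v -> toughness_lt (del_edge g u v) t.

Lemma witness u w : g u w -> exists S,
  cutset (del_edge g u w) S /\ #|S|%:R < (ncomp (del_edge g u w) S)%:R * t.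
Proof.
move=> guw; have H := mt guw.
case: (boolP [exists S, cutset (del_edge g u w) S &&
          (#|S|%:R < (ncomp (del_edge g u w) S)%:R * t)]).
  by case/existsP => S /andP[c l]; exists S.
move/existsPn => H2; exfalso; apply: H => S cS.
have := H2 S; rewrite cS /= -leNgt => H3.
by rewrite ler_pdivlMr.
Qed.

Section L1.
Variables (u w v : V) (S : {set V}).
Hypotheses (vI : v \in I) (gvu : g v u) (gvw : g v w) (uw : u != w).
Hypotheses (cS : cutset (del_edge g u w) S)
  (wS : #|S|%:R < (ncomp (del_edge g u w) S)%:R * t).

Let g' := del_edge g u w.
Let D' := del_verts g' S.
Let iso := [set y in I | (y \notin S) && [forall z, g y z ==> (z \in S)]].

Lemma uK : u \in K. Proof. exact: nbrK vI gvu. Qed.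
Lemma wK : w \in K. Proof. exact: nbrK vI gvw. Qed.

Lemma no_cover P r : P \subset ~: S ->
  (forall x, x \in P -> x != r -> forall z, z \notin S -> ~~ g x z) ->
  (forall x, x \notin S -> exists2 p, p \in P & connect D' x p) -> False.
Proof.
move=> PS isoP cov.
have ub := ncomp_ub V g' S P (del_edge_sym u w) cov.
have lb := ncomp_lb V g S P r sg PS isoP.
have cG : cutset g S.
  by rewrite /cutset; apply: leq_trans lb; apply: leq_trans ub.
have := tg cG; rewrite ler_pdivlMr // => H.
have H1 : (ncomp g' S)%:R <= (ncomp g S)%:R :> rat.
  by rewrite ler_nat; apply: leq_trans lb.
have H2 : (ncomp g' S)%:R * t <= (ncomp g S)%:R * t.
  by apply: ler_wpM2r => //; exact: ltW.
have := lt_le_trans (lt_le_trans wS H2) H.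
by rewrite ltxx.
Qed.

Lemma isoP y : y \in iso -> [/\ y \in I, y \notin S & forall z, g y z -> z \in S].
Proof.
rewrite inE => /andP[yI /andP[yS /forallP H]]; split=> // z gyz.
by move: (H z); rewrite gyz.
Qed.

Lemma iso_isolated y : y \in iso -> forall z, z \notin S -> ~~ g y z.
Proof. by case/isoP=> _ _ H z zS; apply/negP => /H; rewrite (negbTE zS). Qed.

Lemma iso_sub : iso \subset ~: S.
Proof. by apply/subsetP => y /isoP[_ yS _]; rewrite inE. Qed.

Lemma g'_I x z : x \in I -> g x z -> g' x z.
Proof.
move=> xI gxz; rewrite /g' /del_edge /= gxz /=.
have xu : (x == u) = false.
  by apply/negbTE; apply/eqP => exu; move: uK; rewrite inK -exu xI.
have xw : (x == w) = false.
  by apply/negbTE; apply/eqP => exu; move: wK; rewrite inK -exu xI.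
by rewrite xu xw.
Qed.

Lemma I_step x : x \in I -> x \notin S -> x \notin iso ->
  exists2 z, (z \in K) && (z \notin S) & connect D' x z.
Proof.
move=> xI xS xiso.
have : ~~ [forall z, g x z ==> (z \in S)].
  by apply: contra xiso => H; rewrite inE xI xS H.
case/forallPn => z; rewrite negb_imply => /andP[gxz zS].
exists z; first by rewrite (nbrK xI gxz) zS.
by apply: connect1; rewrite /D' /del_verts /= xS zS (g'_I xI gxz).
Qed.

Lemma K_root r : r \in K -> r \notin S ->
  (forall x, x \in K -> x \notin S -> connect D' x r) -> False.
Proof.
move=> rK rS cK.
apply: (@no_cover (r |: iso) r).
- by rewrite subUset sub1set inE rS iso_sub.
- move=> x; rewrite in_setU1 => /orP[/eqP->|xi]; first by rewrite eqxx.
  by move=> _; exact: iso_isolated xi.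
- move=> x xS; case: (boolP (x \in K)) => xK.
    by exists r; [rewrite setU11 | exact: cK].
  have xI : x \in I by move: xK; rewrite inK negbK.
  case: (boolP (x \in iso)) => xi.
    by exists x; [rewrite setU1r | exact: connect0].
  have [z /andP[zK zS] cxz] := I_step xI xS xi.
  exists r; first by rewrite setU11.
  exact: connect_trans cxz (cK z zK zS).
Qed.

Lemma K_sub : K \subset S -> False.
Proof.
move=> KS.
apply: (@no_cover iso u).
- exact: iso_sub.
- by move=> x xi _; exact: iso_isolated xi.
- move=> x xS.
  have xK : x \notin K by apply: contra xS; move/subsetP: KS; apply.
  have xI : x \in I by move: xK; rewrite inK negbK.
  case: (boolP (x \in iso)) => xi; first by exists x.
  have [z /andP[zK zS] cxz] := I_step xI xS xi.
  by move/subsetP: KS => /(_ z zK); rewrite (negbTE zS).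
Qed.

Lemma K_pair r : r \in K -> r \notin S ->
  (forall x, x \in K -> x \notin S -> x != r ->
     ~~ (((x == u) && (r == w)) || ((x == w) && (r == u)))) -> False.
Proof.
move=> rK rS H; apply: (K_root rK rS) => x xK xS.
case: (eqVneq x r) => [->|xr]; first exact: connect0.
apply: connect1; rewrite /D' /del_verts /= xS rS /g' /del_edge /=.
by rewrite (cl xK rK xr) H.
Qed.

Lemma not_K_sub : exists2 r, r \in K & r \notin S.
Proof.
case: (boolP (K \subset S)) => [/K_sub //|/subsetPn[r rK rS]].
by exists r.
Qed.

Lemma uS : u \notin S.
Proof.
apply/negP => uS0; have [r rK rS] := not_K_sub.
apply: (K_pair rK rS) => x xK xS xr.
have xu : (x == u) = false by apply/negbTE; apply: contraNneq xS => ->.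
have ru : (r == u) = false by apply/negbTE; apply: contraNneq rS => ->.
by rewrite xu ru andbF.
Qed.

Lemma wS0 : w \notin S.
Proof.
apply/negP => wS1; have [r rK rS] := not_K_sub.
apply: (K_pair rK rS) => x xK xS xr.
have xw : (x == w) = false by apply/negbTE; apply: contraNneq xS => ->.
have rw : (r == w) = false by apply/negbTE; apply: contraNneq rS => ->.
by rewrite xw rw andbF.
Qed.

Lemma KS z : z \in K -> z != u -> z != w -> z \in S.
Proof.
move=> zK zu zw; apply/negPn/negP => zS.
apply: (K_pair zK zS) => x xK xS xr.
by rewrite (negbTE zu) (negbTE zw) !andbF.
Qed.

Lemma comS y : g y u -> g y w -> y \in S.
Proof.
move=> gyu gyw; apply/negPn/negP => yS.
have yu : (y == u) = false by apply/negbTE; apply: contraTneq gyu => ->; rewrite ig.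
have yw : (y == w) = false by apply/negbTE; apply: contraTneq gyw => ->; rewrite ig.
apply: (K_root uK uS) => x xK xS.
case: (eqVneq x u) => [->|xu]; first exact: connect0.
case: (eqVneq x w) => [->|xw]; last by move: xS; rewrite KS.
apply: (@connect_trans _ _ y).
  apply: connect1; rewrite /D' /del_verts /= wS0 yS /g' /del_edge /= sg gyw.
  by rewrite yu yw !andbF.
apply: connect1; rewrite /D' /del_verts /= uS yS /g' /del_edge /= gyu.
by rewrite yu yw.
Qed.

Lemma in_uw z : z \in K -> z \notin S -> z \in [set u; w].
Proof.
move=> zK zS; rewrite in_set2.
case: (eqVneq z u) => // zu; case: (eqVneq z w) => // zw.
by move: zS; rewrite KS.
Qed.

Lemma ub2 : (ncomp g' S <= 2 + #|iso|)%N.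
Proof.
have cov : forall x, x \notin S ->
    exists2 p, p \in [set u; w] :|: iso & connect D' x p.
  move=> x xS; case: (boolP (x \in K)) => xK.
    by exists x; [rewrite in_setU in_uw | exact: connect0].
  have xI : x \in I by move: xK; rewrite inK negbK.
  case: (boolP (x \in iso)) => xi.
    by exists x; [rewrite in_setU xi orbT | exact: connect0].
  have [z /andP[zK zS] cxz] := I_step xI xS xi.
  by exists z; [rewrite in_setU in_uw | exact: cxz].
apply: leq_trans (ncomp_ub V g' S ([set u; w] :|: iso) (del_edge_sym u w) cov) _.
have := cardsU [set u; w] iso; have := cards2 u w; lia.
Qed.

Lemma count_S : (#|K| + #|S :&: I| <= #|S| + 2)%N.
Proof.
have e1 := cardsID I S.
have e2 := cardsID [set u; w] K.
have s1 : (#|K :\: [set u; w]| <= #|S :\: I|)%N.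
  apply: subset_leq_card; apply/subsetP => z; rewrite !inE negb_or.
  case/andP=> /andP[zu zw] zK.
  by rewrite KS // -inK zK.
have s2 : (#|K :&: [set u; w]| <= 2)%N.
  apply: leq_trans (subset_leq_card (subsetIr _ _)) _.
  by rewrite cards2; case: (u != w).
lia.
Qed.

Lemma vS : v \in S.
Proof. exact: comS gvu gvw. Qed.

Lemma X_ge1 : (1 <= #|S :&: I|)%N.
Proof. by rewrite card_gt0; apply/set0Pn; exists v; rewrite inE vS vI. Qed.

Lemma wit2 : #|S|%:R < (2 + #|iso|)%:R * t.
Proof.
apply: lt_le_trans wS _; apply: ler_wpM2r; first exact: ltW.
by rewrite ler_nat; exact: ub2.
Qed.

Lemma iso_I : (#|S :&: I| + #|iso| <= #|I|)%N.
Proof.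
have e := cardsID S I.
have s : (#|iso| <= #|I :\: S|)%N.
  apply: subset_leq_card; apply/subsetP => y /isoP[yI yS _].
  by rewrite inE yS yI.
rewrite setIC; lia.
Qed.

Lemma X1 y : y \in I -> y != v -> y \notin S.
Proof.
move=> yI yv; apply/negP => yS.
have X2 : (2 <= #|S :&: I|)%N.
  have : [set v; y] \subset S :&: I.
    by apply/subsetP => z; rewrite !inE => /orP[]/eqP->; rewrite ?vS ?vI ?yS ?yI.
  move/subset_leq_card; rewrite cards2 eq_sym yv; done.
have := iso_I; have := count_S => cS1 iI.
have I2 : (1 < #|I|)%N by clear -iI X2; lia.
have T : #|I|%:R * t <= #|K|%:R.
  apply: (@tough_bound K I v) => //.
    by apply/subsetP => x xI; rewrite inE inK xI.
  move=> x xI _ z zK; have zI : z \in I by move: zK; rewrite inK negbK.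
  exact: ind xI zI.
have W := wit2.
have A1 : (#|S :&: I| + #|iso|)%:R * t <= #|I|%:R * t.
  by apply: ler_wpM2r; [exact: ltW | rewrite ler_nat].
have A2 : 2%:R * t <= #|S :&: I|%:R * t.
  by apply: ler_wpM2r; [exact: ltW | rewrite ler_nat].
have A3 : (#|K| + #|S :&: I|)%:R <= (#|S| + 2)%:R :> rat by rewrite ler_nat.
have A4 : 2%:R <= #|S :&: I|%:R :> rat by rewrite ler_nat.
rewrite !natrD !mulrDl in A1 A3 W.
lra.
Qed.

Lemma La y : y \in I -> y != v -> ~~ g y u.
Proof.
move=> yI yv; apply/negP => gyu.
have yS := X1 yI yv.
have gyw : ~~ g y w.
  by apply/negP => gyw; have := comS gyu gyw; rewrite (negbTE yS).
have yK : y \notin K by rewrite inK yI.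
have wy : (w \notin y |: iso).
  rewrite in_setU1 negb_or; apply/andP; split.
    by apply: contraNneq yK => <-; exact: wK.
  by apply/negP => /isoP[wI _ _]; move: wK; rewrite inK wI.
have yi : y \notin iso.
  by apply/negP => /isoP[_ _ H]; move: (H u gyu); rewrite (negbTE uS).
have cP : #|w |: (y |: iso)| = (2 + #|iso|)%N.
  by rewrite cardsU1 wy cardsU1 yi.
have T : #|w |: (y |: iso)|%:R * t <= #|K :\ w|%:R.
  apply: (@tough_bound (K :\ w) (w |: (y |: iso)) w).
  - apply/subsetP => x; rewrite !in_setU1 => /orP[/eqP->|/orP[/eqP->|xi]].
    + by rewrite !inE eqxx.
    + by rewrite !inE (negbTE yK) andbF.
    + by case/isoP: xi => xI _ _; rewrite !inE inK xI andbF.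
  - move=> x; rewrite !in_setU1 => /orP[/eqP->|/orP[/eqP->|xi]]; first by rewrite eqxx.
    + move=> _ z; rewrite in_setD1 negb_and negbK => /orP[/eqP->|zK] //.
      have zI : z \in I by move: zK; rewrite inK negbK.
      exact: ind yI zI.
    + move=> _ z; rewrite in_setD1 negb_and negbK => /orP[/eqP->|zK].
        exact: iso_isolated xi _ wS0.
      have zI : z \in I by move: zK; rewrite inK negbK.
      by case/isoP: xi => xI _ _; exact: ind xI zI.
  - by rewrite cP.
have eK := cardsD1 w K; rewrite wK /= in eK.
have := count_S; have := X_ge1 => c1 c2.
have Hle : (#|K :\ w| <= #|S|)%N by clear -eK c1 c2; lia.
have W := wit2.
rewrite cP in T.
have : #|K :\ w|%:R <= #|S|%:R :> rat by rewrite ler_nat.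
lra.
Qed.

Lemma Lb : #|K|%:R - 1 < (1 + #|I|)%:R * t.
Proof.
have := count_S; have := X_ge1; have := iso_I => c1 c2 c3.
have W := wit2.
have A1 : (2 + #|iso|)%:R * t <= (1 + #|I|)%:R * t.
  by apply: ler_wpM2r; [exact: ltW | rewrite ler_nat; clear -c1 c2; lia].
have A2 : #|K|%:R <= (#|S| + 1)%:R :> rat.
  by rewrite ler_nat; clear -c2 c3; lia.
rewrite natrD in A2; rewrite !natrD !mulrDl in A1 W.
lra.
Qed.

End L1.

Lemma pairK u w v : v \in I -> g v u -> g v w -> u != w -> g u w.
Proof. by move=> vI gvu gvw uw; apply: cl (nbrK vI gvu) (nbrK vI gvw) uw. Qed.

Lemma L1a u w v y : v \in I -> g v u -> g v w -> u != w ->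
  y \in I -> y != v -> ~~ g y u.
Proof.
move=> vI gvu gvw uw yI yv.
have [S [cS wS]] := witness (pairK vI gvu gvw uw).
exact: (La vI gvu gvw uw cS wS yI yv).
Qed.

Lemma L1b u w v : v \in I -> g v u -> g v w -> u != w ->
  #|K|%:R - 1 < (1 + #|I|)%:R * t.
Proof.
move=> vI gvu gvw uw.
have [S [cS wS]] := witness (pairK vI gvu gvw uw).
exact: (Lb vI gvu gvw uw cS wS).
Qed.

Hypothesis ncomplete : ~ (forall x y, x != y -> g x y).
Hypothesis no1 : forall x, degree g x != 1%N.

Lemma deg_ge2 v : (2 <= degree g v)%N.
Proof.
have d1 := no1 v.
case: (posnP (degree g v)) => [d0|]; last by case: (degree g v) d1 => [|[|]].
exfalso.
have iso : forall z, ~~ g v z.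
  move=> z; apply/negP => gvz.
  have : z \in [set y | g v y] by rewrite inE.
  by move/card0_eq: d0 => ->.
case: (boolP [exists z, z != v]) => [/existsP[z zv]|/existsPn H].
  have T := @tough_bound set0 [set v; z] z.
  have : 2%:R * t <= #|@set0 V|%:R.
    have C : #|[set v; z]| = 2%N by rewrite cards2 eq_sym zv.
    rewrite -C; apply: T; first by apply/subsetP => x; rewrite !inE.
      move=> x; rewrite !inE => /orP[/eqP->|/eqP->]; last by rewrite eqxx.
      by move=> _ y _; exact: iso.
    by rewrite cards2 eq_sym zv.
  rewrite cards0 => H.
  have H2 : 0 < 2%:R * t by apply: mulr_gt0.
  by move: (lt_le_trans H2 H); rewrite ltr0n.
apply: ncomplete => x y xy.
by move: (H x) (H y); rewrite !negbK => /eqP ex /eqP ey; rewrite ex ey eqxx in xy.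
Qed.

Lemma final : False.
Proof.
have [v vI] : exists v, v \in I.
  case: (eqVneq I set0) => [I0|/set0Pn [v vI]]; last by exists v.
  exfalso; apply: ncomplete => x y xy.
  have inK' z : z \in K by rewrite inK I0 inE.
  exact: cl (inK' x) (inK' y) xy.
set N := [set y | g v y].
have dN : degree g v = #|N| by [].
have NK : N \subset K by apply/subsetP => y; rewrite inE; exact: nbrK vI.
have [u [w [uN wN uw]]] : exists u w, [/\ u \in N, w \in N & u != w].
  by apply/card_gt1P; rewrite -dN; exact: deg_ge2.
rewrite !inE in uN wN.
have hb := L1b vI uN wN uw.
have ha : forall x y, g v x -> y \in I -> y != v -> ~~ g y x.
  move=> x y gvx yI yv.
  case: (eqVneq x u) => [->|xu].
    exact: (L1a vI uN wN uw yI yv).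
  exact: (L1a vI gvx uN xu yI yv).
have T2 : forall z, z \notin N -> z != v -> 2%:R * t <= #|N|%:R.
  move=> z zN zv.
  have vN : v \notin N by rewrite inE ig.
  have C : #|[set v; z]| = 2%N by rewrite cards2 eq_sym zv.
  rewrite -C; apply: (@tough_bound N [set v; z] z).
  - by apply/subsetP => x; rewrite !inE => /orP[]/eqP->; [rewrite ig | move: zN; rewrite inE].
  - move=> x; rewrite !inE => /orP[/eqP->|/eqP->]; last by rewrite eqxx.
    by move=> _ y; rewrite inE.
  - by rewrite cards2 eq_sym zv.
have hd2 := deg_ge2 v.
case: (ltnP 1 #|I|) => [I2|I1].
  have [z zI zv] : exists2 z, z \in I & z != v.
    case/card_gt1P: I2 => [a [b [aI bI ab]]].
    case: (eqVneq a v) => [av|av]; last by exists a.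
    by exists b => //; rewrite -av eq_sym.
  have zN : z \notin N by rewrite inE; apply/negP => gvz; move: (ind vI zI); rewrite gvz.
  have t2 := T2 z zN zv.
  have T1 : #|I|%:R * t <= #|K :\: N|%:R.
    apply: (@tough_bound (K :\: N) I v).
    - by apply/subsetP => x xI; rewrite !inE inK xI andbF.
    - move=> x xI xv y; rewrite !inE negb_and negbK => /orP[yN|yK].
        by apply: ha => //; rewrite inE in yN.
      have yI : y \in I by move: yK; rewrite inK negbK.
      exact: ind xI yI.
    - exact: I2.
  have eK := cardsID N K; move/setIidPr: NK => NK'; rewrite NK' in eK.
  have : (#|K :\: N| + #|N|)%:R = #|K|%:R :> rat by rewrite -eK addnC.
  rewrite natrD => eK'.
  rewrite !natrD !mulrDl in hb.
  have : 2%:R <= #|N|%:R :> rat by rewrite ler_nat -dN.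
  rewrite -dN in t2.
  lra.
case: (boolP (K \subset N)) => [KN|/subsetPn[z zK zN]].
  apply: ncomplete => x y xy.
  have Iv : forall a, a \in I -> a = v.
    move=> a aI; apply/eqP; apply: contraT => av.
    have : [set a; v] \subset I by apply/subsetP => b; rewrite !inE => /orP[]/eqP->.
    by move/subset_leq_card; rewrite cards2 av => /leq_trans /(_ I1).
  case: (boolP (x \in I)) => xI.
    have yK : y \in K by rewrite inK; apply: contra xy => yI; rewrite (Iv x xI) (Iv y yI).
    by move/subsetP: KN => /(_ y yK); rewrite inE (Iv x xI).
  case: (boolP (y \in I)) => yI.
    have xK : x \in K by rewrite inK.
    by move/subsetP: KN => /(_ x xK); rewrite inE (Iv y yI) sg.
  by apply: cl xy; rewrite inK.
have zv : z != v by apply: contraTneq zK => ->; rewrite inK vI.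
have t2 := T2 z zN zv.
have NKz : (#|N| <= #|K :\ z|)%N.
  by apply: subset_leq_card; apply/subsetP => y yN; rewrite !inE (subsetP NK y yN) andbT;
     apply: contraNneq zN => <-.
have eK := cardsD1 z K; rewrite zK /= in eK.
have HK : (#|N| + 1)%:R <= #|K|%:R :> rat by rewrite ler_nat; clear -eK NKz; lia.
have HI : (1 + #|I|)%:R <= 2%:R :> rat by rewrite ler_nat add1n ltnS.
have HIt : (1 + #|I|)%:R * t <= 2%:R * t by apply: ler_wpM2r => //; exact: ltW.
rewrite natrD in HK; rewrite -dN in t2 HK.
rewrite !natrD ?mulrDl in hb HI HIt.
clear eK dN; lra.
Qed.

End Main.

Unset Implicit Arguments.

Lemma complete_tough (V : finType) (g : rel V) (t' : rat) : symmetric g ->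
  (forall x y, x != y -> g x y) -> tough g t'.
Proof.
move=> sg cg S cS; exfalso.
have : (ncomp g S <= 1)%N.
  case: (boolP [exists x, x \notin S]) => [/existsP[x0 x0S]|/existsPn H].
    apply: leq_trans (ncomp_ub V g S [set x0] sg _) _; last by rewrite cards1.
    move=> x xS; exists x0; first by rewrite inE.
    case: (eqVneq x x0) => [->|xx0]; first exact: connect0.
    by apply: connect1; rewrite /del_verts /= xS x0S cg.
  apply: leq_trans (ncomp_ub V g S set0 sg _) _; last by rewrite cards0.
  by move=> x xS; move: (H x); rewrite xS.
by move: cS; rewrite /cutset => cS; rewrite leqNgt cS.
Qed.

Theorem mainTheorem8 (V : finType) (g : rel V) (t : rat) :
  simple_graph g -> 0 < t -> minimally_tough g t -> split_graph g ->
  exists v : V, ((degree g v)%:Z = Num.ceil (2 * t))%R.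
Proof.
move=> [sg ig] t0 [[tg tmax] mt] [K [I [KI KUI cl ind]]].
have ncomplete : ~ (forall x y, x != y -> g x y).
  move=> cg; apply: (tmax (t + 1)); first lra.
  exact: complete_tough sg cg.
case: (boolP [exists x, degree g x == 1%N]) => [/existsP[x /eqP dx]|/existsPn no1];
  last by exfalso; exact: (final sg ig t0 tg KI KUI cl ind mt ncomplete no1).
exists x; rewrite dx.
have /cards1P[u Nu] : #|[set y | g x y]| == 1%N by rewrite -dx.
have : u \in [set y | g x y] by rewrite Nu set11.
rewrite inE => gxu.
have xu : x != u by apply: contraTneq gxu => ->; rewrite ig.
have t2 : 2 * t <= 1.
  case: (boolP [exists z, (z != x) && (z != u)]) => [/existsP[z /andP[zx zu]]|/existsPn H].
    have C : #|[set x; z]| = 2%N by rewrite cards2 eq_sym zx.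
    have := @tough_bound V g t sg t0 tg [set u] [set x; z] z.
    rewrite C cards1; apply.
    - by apply/subsetP => y; rewrite !inE => /orP[]/eqP->; rewrite ?xu ?zu.
    - move=> y; rewrite !inE => /orP[/eqP->|/eqP->]; last by rewrite eqxx.
      move=> _ y' y'u; apply/negP => gxy'.
      have : y' \in [set y | g x y] by rewrite inE.
      by rewrite Nu (negbTE y'u).
    - by [].
  exfalso; apply: ncomplete => a b ab.
  have Hab : forall c, (c == x) || (c == u).
    by move=> c; move: (H c); rewrite negb_and !negbK orbC.
  move: (Hab a) (Hab b) ab => /orP[]/eqP-> /orP[]/eqP->; rewrite ?eqxx //.
  by rewrite sg.
apply/eqP; rewrite eq_le; apply/andP; split.
  by rewrite -gtz0_ge1 ceil_gt_int mulr_gt0.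
by rewrite ceil_le_int.
Qed.
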